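(* Let $X$ be a topological space whose frame of open sets has a presentation $\mathcal{O}X=\langle G\mid R\rangle$, with quotient frame homomorphism $\overline{q}\colon\mathcal{O}(\Sigma^G)\to\mathcal{O}X$. Give $\mathcal{O}(\Sigma^G)$ and $\mathcal{O}X$ their Scott topologies, and let $\widetilde{\mathrm{ev}}\colon\mathcal{O}(\Sigma^G)\times X\to\Sigma$ be the continuous map with $\widetilde{\mathrm{ev}}(m,x)=\top$ iff $x\in\overline{q}(m)$. Suppose $\overline{q}$ has a continuous section $s\colon\mathcal{O}X\to\mathcal{O}(\Sigma^G)$ (i.e. $\overline{q}\circ s=\mathrm{id}$). Then $\mathcal{O}X$ with the Scott topology, together with the evaluation map $\widetilde{\mathrm{ev}}\circ(s\times X)$ (which sends $(U,x)$ to $\top$ iff $x\in U$), is the exponential $\Sigma^X$ in the category $\mathrm{Top}$ of topological spaces; in particular $X$ is locally compact (i.e. $\mathcal{O}X$ is a continuous lattice).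
   Context: Frames: complete lattices where finite meets distribute over arbitrary joins. $\Sigma$ is Sierpiński space $\{\bot,\top\}$ with open sets $\emptyset,\{\top\},\{\bot,\top\}$. For a set $G$, $\mathcal{O}(\Sigma^G)$ is the free frame on $G$. A presentation $\mathcal{O}X=\langle G\mid R\rangle$ means the frame of opens of $X$ is the quotient of the free frame on $G$ by the congruence generated by the relations $R$, with quotient map $\overline{q}$; a point $x\in X$ ''lies in'' $m\in\mathcal{O}(\Sigma^G)$ iff $x\in\overline{q}(m)$. Scott topology: $V$ is open iff it is an upset and whenever the join of a directed set lies in $V$ some member of the set does. The way-below relation: $a\ll b$ iff whenever $b\le\bigvee D$ for directed $D$, $a\le d$ for some $d\in D$; a lattice is continuous if every $b$ is the directed join of $\{a\mid a\ll b\}$. *)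

(* Defs.v *)
From HB Require Import structures.
From Stdlib Require Import List.
From mathcomp Require Import all_boot all_order.
From mathcomp Require Import boolp classical_sets topology.

Set Implicit Arguments.
Unset Strict Implicit.
Unset Printing Implicit Defensive.

Local Open Scope classical_set_scope.

(* Sierpinski space Sigma = {bot, top} is encoded as bool (top = true);
   its open sets are set0, [set true], setT.  A map f : Z -> bool from a
   topological space is continuous into Sigma iff f^-1(top) is open. *)
Definition sigma_continuous (Z : topologicalType) (f : Z -> bool) : Prop :=
  open (f @^-1` [set true]).

(* Open sets of the product space Sigma^G (product topology): the
   elements of the free frame O(Sigma^G).  Basic opens are the sets
   {h | h g = top for all g in F}, F a finite list of generators. *)
Definition SigmaG_open (G : Type) (U : set (G -> bool)) : Prop :=
  forall f, U f -> exists F : list G,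
    (forall g, Stdlib.Lists.List.In g F -> f g = true) /\
    (forall h, (forall g, Stdlib.Lists.List.In g F -> h g = true) -> U h).

Definition directed (T : Type) (D : set (set T)) : Prop :=
  (exists d, D d) /\
  forall a b, D a -> D b -> exists c, [/\ D c, a `<=` c & b `<=` c].

(* Scott-open subsets V of a frame of open sets P (a family of subsets of T
   closed under arbitrary unions, ordered by inclusion, so that joins are
   unions): V is an upset and inaccessible by directed joins. *)
Definition scott_open (T : Type) (P : set (set T)) (V : set (set T)) : Prop :=
  [/\ V `<=` P,
      (forall a b, V a -> P b -> a `<=` b -> V b) &
      (forall D, D `<=` P -> directed D -> V (\bigcup_(d in D) d) ->
         exists2 d, D d & V d)].

Definition frame_hom (G : Type) (X : topologicalType)
  (q : set (G -> bool) -> set X) : Prop :=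
  [/\ (forall m, SigmaG_open m -> open (q m)),
      q setT = setT,
      (forall m m', SigmaG_open m -> SigmaG_open m' ->
         q (m `&` m') = q m `&` q m') &
      (forall M : set (set (G -> bool)), M `<=` @SigmaG_open G ->
         q (\bigcup_(m in M) m) = \bigcup_(m in M) q m)].

Definition SigmaG_congruence (G : Type)
  (C : set (G -> bool) -> set (G -> bool) -> Prop) : Prop :=
  (forall a b, C a b -> SigmaG_open a /\ SigmaG_open b) /\
  [/\ (forall a, SigmaG_open a -> C a a),
      (forall a b, C a b -> C b a),
      (forall a b c, C a b -> C b c -> C a c),
      (forall a b c, C a b -> SigmaG_open c -> C (a `&` c) (b `&` c)) &
      (forall M : set (set (G -> bool) * set (G -> bool)),
         (forall p, M p -> C p.1 p.2) ->
         C (\bigcup_(p in M) p.1) (\bigcup_(p in M) p.2))].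

Definition gen_congruence (G : Type)
  (R : set (set (G -> bool) * set (G -> bool))) (a b : set (G -> bool)) : Prop :=
  forall C, SigmaG_congruence C -> (forall p, R p -> C p.1 p.2) -> C a b.

(* O X = < G | R > with quotient map q : O(Sigma^G) -> O X : q is a
   surjective frame homomorphism whose kernel is the congruence generated
   by the relations R (pairs of elements of the free frame). *)
Definition presentation (G : Type) (R : set (set (G -> bool) * set (G -> bool)))
  (X : topologicalType) (q : set (G -> bool) -> set X) : Prop :=
  [/\ (forall p, R p -> SigmaG_open p.1 /\ SigmaG_open p.2),
      frame_hom q,
      (forall U, open U -> exists2 m, SigmaG_open m & q m = U) &
      (forall a b, SigmaG_open a -> SigmaG_open b ->
         (q a = q b <-> gen_congruence R a b))].

Definition evt (G : Type) (X : topologicalType) (q : set (G -> bool) -> set X)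
  (m : set (G -> bool)) (x : X) : bool := `[< q m x >].

Definition scott_continuous_OX_SigmaG (G : Type) (X : topologicalType)
  (s : set X -> set (G -> bool)) : Prop :=
  forall V, scott_open (@SigmaG_open G) V ->
    scott_open open [set U | open U /\ V (s U)].

Definition ev_continuous (X : topologicalType) (e : set X -> X -> bool) : Prop :=
  forall U x, open U -> e U x ->
    exists V O, [/\ scott_open open V, V U, open O, O x &
      forall U' x', V U' -> O x' -> e U' x'].

Definition scott_continuous_to_OX (Y X : topologicalType) (h : Y -> set X) : Prop :=
  (forall y, open (h y)) /\
  forall V, scott_open open V -> open (h @^-1` V).

Definition is_exponential_Sigma (X : topologicalType) (e : set X -> X -> bool) : Prop :=
  ev_continuous e /\
  forall (Y : topologicalType) (f : Y * X -> bool), sigma_continuous f ->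
    exists h : Y -> set X,
      [/\ scott_continuous_to_OX h,
          (forall y x, e (h y) x = f (y, x)) &
          (forall h' : Y -> set X, scott_continuous_to_OX h' ->
             (forall y x, e (h' y) x = f (y, x)) -> h' = h)].

Definition way_below (X : topologicalType) (V U : set X) : Prop :=
  forall D, D `<=` open -> directed D -> U `<=` \bigcup_(d in D) d ->
    exists2 d, D d & V `<=` d.

Definition continuous_lattice_OX (X : topologicalType) : Prop :=
  forall U : set X, open U ->
    directed [set V | open V /\ way_below V U] /\
    U = \bigcup_(V in [set V | open V /\ way_below V U]) V.

(* Main.v *)
Require Import Defs.
From mathcomp Require Import all_boot all_order.
From mathcomp Require Import boolp classical_sets topology.

Local Open Scope classical_set_scope.

Definition upF (G : Type) (F : list G) : set (G -> bool) :=
  [set h | forall g, Stdlib.Lists.List.In g F -> h g = true].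

Arguments upF {G}.

Definition WF (G : Type) (F : list G) : set (set (G -> bool)) :=
  [set m | SigmaG_open m /\ upF F `<=` m].

Arguments WF {G}.

Lemma upF_open (G : Type) (F : list G) : SigmaG_open (upF F).
Proof. move=> f hf; exists F; split; [exact: hf | by move=> h]. Qed.

Lemma WF_scott (G : Type) (F : list G) : scott_open (@SigmaG_open G) (WF F).
Proof.
split.
- by move=> m [].
- move=> a b [_ ha] hb ab; split => //; exact: subset_trans ha ab.
- move=> D DP dD [_ hU].
  have hF : (\bigcup_(d in D) d) (fun g => `[< Stdlib.Lists.List.In g F >]).
    by apply: hU => g gF; apply: asboolT.
  case: hF => d Dd dh.
  exists d => //; split; first exact: DP.
  move=> h hh.
  have [F' [F'1 F'2]] := DP d Dd _ dh.
  apply: F'2 => g gF'; apply: hh.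
  exact: asboolW (F'1 g gF').
Qed.

Arguments WF_scott {G}.
Arguments upF_open {G}.

Lemma slice (Y X : topologicalType) (A : set (Y*X)) (y:Y) (x:X) :
  nbhs ((y,x) : Y * X) A -> exists N O, [/\ nbhs y N, nbhs x O & N `*` O `<=` A].
Proof. case=> [[N O]] /= [hN hO] hNO. by exists N, O. Qed.

Theorem proposition3p5 (G : Type) (R : set (set (G -> bool) * set (G -> bool)))
  (X : topologicalType) (q : set (G -> bool) -> set X)
  (s : set X -> set (G -> bool)) :
  presentation R q ->
  (forall U, open U -> SigmaG_open (s U)) ->
  (forall U, open U -> q (s U) = U) ->
  scott_continuous_OX_SigmaG s ->
  is_exponential_Sigma (fun U x => evt q (s U) x) /\ continuous_lattice_OX X.
Proof.
case=> _ [qopen qT qI qJ] _ _ sopen qs sc.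
have qmono : forall a b, SigmaG_open a -> SigmaG_open b -> a `<=` b -> q a `<=` q b.
  move=> a b ha hb ab; have := qI a b ha hb; rewrite setIidl // => ->.
  by move=> x [].
have key : forall W x, open W -> W x -> exists F : list G, q (upF F) x /\ upF F `<=` s W.
  move=> W x Wo Wx.
  pose M := [set m | exists F : list G, m = upF F /\ upF F `<=` s W].
  have eM : s W = \bigcup_(m in M) m.
    apply/seteqP; split.
    - move=> h hs; have [F [F1 F2]] := sopen W Wo h hs.
      by exists (upF F) => //; exists F; split.
    - by move=> h [m [F [-> sub]] hm]; exact: sub.
  have MP : M `<=` @SigmaG_open G by move=> m [F [-> _]]; exact: upF_open.
  have : q (s W) x by rewrite qs.
  rewrite {1}eM qJ // => -[m [F [-> sub]] hm].
  by exists F.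
pose VF (F : list G) := [set U : set X | open U /\ WF F (s U)].
have VFsc : forall F, scott_open open (VF F) by move=> F; exact: sc _ (WF_scott F).
have wb : forall (W : set X) F, open W -> upF F `<=` s W -> way_below (q (upF F)) W.
  move=> W F Wo sub D Dop dirD WD.
  case: (VFsc F) => _ upV inV.
  have VW : VF F W by split => //; split => //; exact: sopen.
  have VD : VF F (\bigcup_(d in D) d).
    apply: upV VW _ WD; apply: bigcup_open => i Di; exact: Dop.
  have [d Dd [dop [_ hd]]] := inV D Dop dirD VD.
  exists d => //.
  rewrite -(qs d dop); apply: qmono => //; [exact: upF_open | exact: sopen].
have CL : continuous_lattice_OX X.
  move=> U Uo; split.
  - split.
      exists set0; split; first exact: open0.
      move=> D _ [[d Dd] _] _; by exists d.
    move=> a b [ao awb] [bo bwb]; exists (a `|` b); split => //.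
    + split; first exact: openU.
      move=> D Dop dirD UD.
      have [da Dda ada] := awb D Dop dirD UD.
      have [db Ddb bdb] := bwb D Dop dirD UD.
      have [c [Dc dac dbc]] := dirD.2 _ _ Dda Ddb.
      exists c => //; rewrite subUset; split; [exact: subset_trans ada dac | exact: subset_trans bdb dbc].
  - apply/seteqP; split.
    + move=> x Ux; have [F [hx sub]] := key U x Uo Ux.
      exists (q (upF F)) => //; split; [exact: qopen (upF_open F) | exact: wb].
    + move=> x [V [Vo Vwb] Vx].
      have [d Dd Vd] : exists2 d, [set U] d & V `<=` d.
        apply: Vwb.
        * by move=> _ ->.
        * split; first by exists U.
          by move=> a b -> ->; exists U; split.
        * by move=> y Uy; exists U.
      by move: Dd Vd => -> /(_ x Vx).
split; last exact: CL.
split.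
  move=> U x Uo exU.
  have Ux : U x by rewrite -(qs U Uo); exact: asboolW exU.
  have [F [hx sub]] := key U x Uo Ux.
  exists (VF F), (q (upF F)); split.
  - exact: VFsc.
  - by split => //; split => //; exact: sopen.
  - exact: qopen (upF_open F).
  - exact: hx.
  - move=> U' x' [U'o [_ hs]] hx'.
    apply: asboolT; apply: (qmono (upF F)) => //; [exact: upF_open | exact: sopen].
move=> Y f fc.
have sl : forall (y : Y) (x : X), f (y, x) ->
    exists N O, [/\ nbhs y N, nbhs x O & N `*` O `<=` f @^-1` [set true]].
  move=> y x hyx; apply: slice.
  by move: fc; rewrite /sigma_continuous openE => /(_ (y, x) hyx).
have hopen : forall y : Y, open [set x | f (y, x)].
  move=> y; rewrite openE => x hx.
  have [N [O [hN hO hNO]]] := sl y x hx.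
  apply: filterS hO => x' hx'; apply: (hNO (y, x')); split => //=.
  exact: nbhs_singleton hN.
exists (fun y => [set x | f (y, x)]); split.
- split; first exact: hopen.
  move=> V [Vop upV inV]; rewrite openE => y0 hy0.
  have [Dir eqU] := CL _ (hopen y0).
  have hy0' : V (\bigcup_(V in [set V | open V /\ way_below V [set x | f (y0, x)]]) V).
    by rewrite -eqU.
  have [U [Uo Uwb] VU] := inV _ (fun W (hW : open W /\ _) => proj1 hW) Dir hy0'.
  pose D0 := [set O : set X | open O /\ exists N, nbhs y0 N /\ N `*` O `<=` f @^-1` [set true]].
  have D0op : D0 `<=` open by move=> O [].
  have dirD0 : directed D0.
    split.
      exists set0; split; first exact: open0.
      exists setT; split; first exact: filterT.
      by move=> [a b] [_ []].
    move=> a b [ao [Na [hNa hab]]] [bo [Nb [hNb hbb]]].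
    exists (a `|` b); split => //.
    split; first exact: openU.
    exists (Na `&` Nb); split; first exact: filterI.
    move=> [u v] [[/= Nau Nbu] [av|bv]].
      by apply: hab; split.
    by apply: hbb; split.
  have cov : [set x | f (y0, x)] `<=` \bigcup_(d in D0) d.
    move=> x hx; have [N [O [hN hO hNO]]] := sl y0 x hx.
    exists (interior O); last exact: hO.
    split; first exact: open_interior.
    exists N; split => //.
    move=> [u v] [/= Nu Ov]; apply: hNO; split => //.
    exact: interior_subset.
  have [d [dop [N [hN hNd]]] Ud] := Uwb D0 D0op dirD0 cov.
  apply: filterS hN => y Ny.
  apply: upV VU _ _; first exact: hopen.
  by move=> x Ux; apply: (hNd (y, x)); split => //; exact: Ud.
- by move=> y x; rewrite /evt qs ?asboolb //; exact: hopen.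
- move=> h' [h'op _] he.
  apply: funext => y; apply: funext => x; apply: propext.
  have := he y x; rewrite /evt qs; last exact: h'op.
  move=> e; rewrite /= -e; split; [exact: asboolT | exact: asboolW].
Qed.
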